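(* For $\beta,c,\beta',c'\in\mathbb{C}$, the formal deformations $(\langle\cdot,\cdot\rangle^{\beta,c}_n)_{n\ge0}$ and $(\langle\cdot,\cdot\rangle^{\beta',c'}_n)_{n\ge0}$ of $\mathcal K$ are modular-isomorphic if and only if $c=c'$ and either $\beta=\beta'=0$ or both $\beta\ne0$ and $\beta'\ne0$.
   Context: Let $\mathcal K=\mathbb{C}[E_4,E_6,A,A^{-1},B]$ be the localization at $A$ of the polynomial algebra $\mathbb{C}[E_4,E_6,A,B]$ in algebraically independent variables, bigraded by weight and index with $E_4$: $(4,0)$, $E_6$: $(6,0)$, $A$: $(-2,1)$, $B$: $(0,1)$; $\mathcal K_{k,p}$ are the homogeneous components. Set $F_2=BA^{-1}$. Let $\pi$ be the derivation with $\pi(f)=kF_2f$ for $f\in\mathcal K_{k,p}$, $S^\flat$ the derivation with $S^\flat(E_4)=-\frac13E_6$, $S^\flat(E_6)=-\frac12E_4^2$, $S^\flat(F_2)=0$, $S^\flat(A)=0$, and $\delta_\beta=S^\flat+\beta\pi$. For $f\in\mathcal K_{k,p}$, $g\in\mathcal K_{\ell,q}$: $\langle f,g\rangle^{\beta,c}_n=\sum_{i=0}^n(-1)^i\binom{k+cp+n-1}{n-i}\binom{\ell+cq+n-1}{i}\delta_\beta^i(f)\delta_\beta^{n-i}(g)$, extended bilinearly; these are formal deformations of $\mathcal K$. Two formal deformations $(\mu_n)_n$, $(\nu_n)_n$ of $\mathcal K$ are modular-isomorphic if there is a $\mathbb{C}$-linear bijection $\phi:\mathcal K\to\mathcal K$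 mapping each $\mathcal K_{k,p}$ into $\mathcal K_{k,p}$ with $\phi(\mu_n(f,g))=\nu_n(\phi(f),\phi(g))$ for all $n\ge0$, $f,g\in\mathcal K$. *)

(* Defs.v *)
From HB Require Import structures.
From mathcomp Require Import all_boot all_order all_algebra.
From Stdlib Require Import ClassicalEpsilon.
Set Implicit Arguments. Unset Strict Implicit. Unset Printing Implicit Defensive.
Import Order.TTheory GRing.Theory Num.Theory.
Local Open Scope ring_scope.

(* A monomial E4^a E6^b A^c B^d, encoded by its exponents (a, b, c, d),
   with c an integer since A is inverted. *)
Definition mono := (nat * nat * int * nat)%type.
Definition m_a (m : mono) : nat := m.1.1.1.
Definition m_b (m : mono) : nat := m.1.1.2.
Definition m_c (m : mono) : int := m.1.2.
Definition m_d (m : mono) : nat := m.2.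

(* bigrading: E4 : (4,0), E6 : (6,0), A : (-2,1), B : (0,1) *)
Definition mwt (m : mono) : int := (4 * m_a m + 6 * m_b m)%N%:Z - 2%:Z * m_c m.
Definition midx (m : mono) : int := m_c m + (m_d m)%:Z.

Definition madd (m m' : mono) : mono :=
  ((m_a m + m_a m')%N, (m_b m + m_b m')%N, m_c m + m_c m', (m_d m + m_d m')%N).

Section K.
Variable C : numClosedFieldType.

(* K = C[E4,E6,A,A^-1,B]: finitely supported coefficient functions on monomials *)
Record K := MkK {
  coef : mono -> C ;
  coef_fin : exists s : seq mono, forall m, coef m != 0 -> m \in s }.

Lemma Kzero_fin : exists s : seq mono, forall m : mono, (0 : C) != 0 -> m \in s.
Proof. by exists [::] => m; rewrite eqxx. Qed.
Definition Kzero : K := MkK Kzero_fin.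

Lemma Kadd_fin (f g : K) :
  exists s : seq mono, forall m, coef f m + coef g m != 0 -> m \in s.
Proof.
case: (coef_fin f) => s1 H1; case: (coef_fin g) => s2 H2.
exists (s1 ++ s2) => m; rewrite mem_cat.
case: (eqVneq (coef f m) 0) => [->|/H1 -> //]; rewrite add0r => /H2 ->.
by rewrite orbT.
Qed.
Definition Kadd (f g : K) : K := MkK (Kadd_fin f g).

Lemma Kscale_fin (a : C) (f : K) :
  exists s : seq mono, forall m, a * coef f m != 0 -> m \in s.
Proof.
case: (coef_fin f) => s H; exists s => m.
by case: (eqVneq (coef f m) 0) => [->|/H //]; rewrite mulr0 eqxx.
Qed.
Definition Kscale (a : C) (f : K) : K := MkK (Kscale_fin a f).

Lemma Kmono_fin (m0 : mono) :
  exists s : seq mono, forall m, ((m == m0)%:R : C) != 0 -> m \in s.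
Proof.
exists [:: m0] => m; rewrite inE; case: (m == m0) => //=.
by rewrite mulr0n eqxx.
Qed.
Definition Kmono (m0 : mono) : K := MkK (Kmono_fin m0).

Definition supp (f : K) : seq mono :=
  undup (proj1_sig (constructive_indefinite_description _ (coef_fin f))).

Definition lin (h : mono -> K) (f : K) : K :=
  foldr Kadd Kzero [seq Kscale (coef f m) (h m) | m <- supp f].

Definition Ksum (l : seq K) : K := foldr Kadd Kzero l.

Definition Kmul (f g : K) : K :=
  lin (fun m => lin (fun m' => Kmono (madd m m')) g) f.

Definition E4 : K := Kmono (1%N, 0%N, 0, 0%N).
Definition E6 : K := Kmono (0%N, 1%N, 0, 0%N).
Definition KA : K := Kmono (0%N, 0%N, 1, 0%N).
Definition KB : K := Kmono (0%N, 0%N, 0, 1%N).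
Definition KAinv : K := Kmono (0%N, 0%N, -1, 0%N).
Definition F2 : K := Kmul KB KAinv.

(* The derivation of K with prescribed values u4, u6, uA, uB on E4, E6, A, B
   (Leibniz rule on monomials, extended linearly). *)
Definition derK (u4 u6 uA uB : K) : K -> K :=
  lin (fun m =>
    Ksum [:: Kscale (m_a m)%:R (Kmul (Kmono ((m_a m).-1, m_b m, m_c m, m_d m)) u4);
             Kscale (m_b m)%:R (Kmul (Kmono (m_a m, (m_b m).-1, m_c m, m_d m)) u6);
             Kscale (m_c m)%:~R (Kmul (Kmono (m_a m, m_b m, m_c m - 1, m_d m)) uA);
             Kscale (m_d m)%:R (Kmul (Kmono (m_a m, m_b m, m_c m, (m_d m).-1)) uB)]).

(* S^flat: S(E4) = -E6/3, S(E6) = -E4^2/2, S(A) = 0, S(F2) = 0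
   (hence S(B) = S(F2 * A) = 0). *)
Definition Sflat : K -> K :=
  derK (Kscale (- 3^-1) E6) (Kscale (- 2^-1) (Kmul E4 E4)) Kzero Kzero.

Definition piK : K -> K :=
  lin (fun m => Kscale (mwt m)%:~R (Kmul F2 (Kmono m))).

Definition delta (beta : C) (f : K) : K := Kadd (Sflat f) (Kscale beta (piK f)).

Definition gbinom (x : C) (j : nat) : C :=
  (\prod_(i < j) (x - i%:R)) / (j`!)%:R.

(* <f,g>^{beta,c}_n on monomials (which are bihomogeneous), extended bilinearly *)
Definition bracket (beta c : C) (n : nat) (f g : K) : K :=
  lin (fun m1 => lin (fun m2 =>
    Ksum [seq Kscale ((-1) ^+ i
                      * gbinom ((mwt m1)%:~R + c * (midx m1)%:~R + n%:R - 1) (n - i)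
                      * gbinom ((mwt m2)%:~R + c * (midx m2)%:~R + n%:R - 1) i)
                (Kmul (iter i (delta beta) (Kmono m1))
                      (iter (n - i) (delta beta) (Kmono m2)))
         | i <- iota 0 n.+1]) g) f.

Definition homog (k p : int) (f : K) : Prop :=
  forall m, coef f m != 0 -> mwt m = k /\ midx m = p.

Definition modular_iso (mu nu : nat -> K -> K -> K) : Prop :=
  exists phi : K -> K,
    [/\ forall (a : C) (f g : K), phi (Kadd (Kscale a f) g) = Kadd (Kscale a (phi f)) (phi g),
        bijective phi,
        forall (k p : int) (f : K), homog k p f -> homog k p (phi f) &
        forall (n : nat) (f g : K), phi (mu n f g) = nu n (phi f) (phi g)].

End K.

(* Main.v *)
Require Import Defs.
From HB Require Import structures.
From mathcomp Require Import all_boot all_order all_algebra.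
From mathcomp Require Import ring zify.
From Stdlib Require Import FunctionalExtensionality ProofIrrelevance ClassicalEpsilon.
Set Implicit Arguments. Unset Strict Implicit. Unset Printing Implicit Defensive.
Import GRing.Theory Num.Theory.
Local Open Scope ring_scope.

Section Infra.
Variable C : numClosedFieldType.
Local Notation KC := (K C).

Lemma Kext (f g : KC) : (forall m, coef f m = coef g m) -> f = g.
Proof.
case: f g => [f Hf] [g Hg] /= H.
have E : f = g by apply: functional_extensionality.
subst g; congr MkK; apply: proof_irrelevance.
Qed.

Lemma big_supp_eq (s1 s2 : seq mono) (G : mono -> C) :
  uniq s1 -> uniq s2 -> (forall m, G m != 0 -> m \in s1) ->
  (forall m, G m != 0 -> m \in s2) ->
  \sum_(m <- s1) G m = \sum_(m <- s2) G m.
Proof.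
move=> u1 u2 h1 h2.
have E1 : \sum_(m <- s1) G m = \sum_(m <- s1 | m \in s2) G m.
  rewrite [RHS]big_mkcond /=; apply: eq_bigr => m _.
  case: ifP => // /negbT ns2.
  by case: (eqVneq (G m) 0) => // /h2; rewrite (negbTE ns2).
have E2 : \sum_(m <- s2) G m = \sum_(m <- s2 | m \in s1) G m.
  rewrite [RHS]big_mkcond /=; apply: eq_bigr => m _.
  case: ifP => // /negbT ns1.
  by case: (eqVneq (G m) 0) => // /h1; rewrite (negbTE ns1).
rewrite E1 E2 -[LHS]big_filter -[RHS]big_filter; apply: perm_big.
apply: uniq_perm; rewrite ?filter_uniq // => m; by rewrite !mem_filter andbC.
Qed.

Lemma sum_delta (s : seq mono) (F : mono -> C) (m0 : mono) :
  uniq s -> (forall m, F m != 0 -> m \in s) ->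
  \sum_(m <- s) F m * (m == m0)%:R = F m0.
Proof.
move=> us hs; case: (boolP (m0 \in s)) => H.
  rewrite (bigD1_seq m0) //= eqxx mulr1 big1 ?addr0 // => m /negbTE ->.
  by rewrite mulr0.
rewrite big1; last first.
  move=> m _; case: eqP => [->|]; last by rewrite mulr0.
  by case: (eqVneq (F m0) 0) => [->|/hs]; rewrite ?mul0r // (negbTE H).
by case: (eqVneq (F m0) 0) => // /hs; rewrite (negbTE H).
Qed.

Lemma supp_uniq (f : KC) : uniq (supp f).
Proof. by rewrite /supp undup_uniq. Qed.

Lemma supp_cover (f : KC) m : coef f m != 0 -> m \in supp f.
Proof.
rewrite /supp mem_undup; case: constructive_indefinite_description => s /= H.
exact: H.
Qed.

Lemma foldr_coef (l : seq KC) m :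
  coef (foldr (@Kadd C) (Kzero C) l) m = \sum_(x <- l) coef x m.
Proof. by elim: l => [|x l IH]; rewrite ?big_nil ?big_cons //= IH. Qed.

Lemma Ksum_coef (l : seq KC) m : coef (Ksum l) m = \sum_(x <- l) coef x m.
Proof. exact: foldr_coef. Qed.

Lemma lin_coef (h : mono -> KC) f m' :
  coef (lin h f) m' = \sum_(m <- supp f) coef f m * coef (h m) m'.
Proof. by rewrite /lin foldr_coef big_map. Qed.

Lemma lin_coefE (h : mono -> KC) f m' (s : seq mono) :
  uniq s -> (forall m, coef f m != 0 -> m \in s) ->
  coef (lin h f) m' = \sum_(m <- s) coef f m * coef (h m) m'.
Proof.
move=> us hs; rewrite lin_coef; apply: big_supp_eq => //.
- exact: supp_uniq.
- move=> m Hm; apply: supp_cover.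
  by case: (eqVneq (coef f m) 0) Hm => // ->; rewrite mul0r eqxx.
- move=> m Hm; apply: hs.
  by case: (eqVneq (coef f m) 0) Hm => // ->; rewrite mul0r eqxx.
Qed.

Lemma coef_mono m0 m : coef (Kmono C m0) m = (m == m0)%:R.
Proof. by []. Qed.

Lemma lin_mono (h : mono -> KC) m0 : lin h (Kmono C m0) = h m0.
Proof.
apply: Kext => m'; rewrite (@lin_coefE _ _ _ [:: m0]) // ?big_seq1 /= ?eqxx ?mul1r //.
by move=> m; rewrite inE; case: (m == m0) => //=; rewrite mulr0n eqxx.
Qed.

Definition sU (f g : KC) := undup (supp f ++ supp g).

Lemma sU_uniq f g : uniq (sU f g). Proof. exact: undup_uniq. Qed.
Lemma sU_l f g m : coef f m != 0 -> m \in sU f g.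
Proof. by move=> H; rewrite mem_undup mem_cat supp_cover. Qed.
Lemma sU_r f g m : coef g m != 0 -> m \in sU f g.
Proof. by move=> H; rewrite mem_undup mem_cat (supp_cover H) orbT. Qed.

Lemma lin_add h (f g : KC) : lin h (Kadd f g) = Kadd (lin h f) (lin h g).
Proof.
apply: Kext => m' /=.
have Hs : forall m, coef (Kadd f g) m != 0 -> m \in sU f g.
  move=> m /=; case: (eqVneq (coef f m) 0) => [->|/sU_l //]; rewrite add0r.
  exact: sU_r.
rewrite (lin_coefE _ _ (sU_uniq f g) Hs) (lin_coefE _ _ (sU_uniq f g) (@sU_l f g)).
rewrite (lin_coefE _ _ (sU_uniq f g) (@sU_r f g)).
rewrite -big_split /=; apply: eq_bigr => m _ /=; by rewrite mulrDl.
Qed.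

Lemma lin_scale h a (f : KC) : lin h (Kscale a f) = Kscale a (lin h f).
Proof.
apply: Kext => m' /=.
have Hs : forall m, coef (Kscale a f) m != 0 -> m \in supp f.
  move=> m /=; case: (eqVneq (coef f m) 0) => [->|/supp_cover //].
  by rewrite mulr0 eqxx.
rewrite (lin_coefE _ _ (supp_uniq f) Hs) lin_coef.
rewrite mulr_sumr; apply: eq_bigr => m _ /=; by rewrite mulrA.
Qed.

Lemma lin_zero h : lin h (Kzero C) = Kzero C.
Proof.
apply: Kext => m'; rewrite (@lin_coefE _ _ _ [::]) ?big_nil //.
by move=> m /=; rewrite eqxx.
Qed.

Lemma lin_ext (h1 h2 : mono -> KC) f : (forall m, h1 m = h2 m) -> lin h1 f = lin h2 f.
Proof. by move=> H; rewrite /lin; congr foldr; apply: eq_map => m; rewrite H. Qed.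

Lemma lin_hadd (h1 h2 : mono -> KC) f :
  lin (fun m => Kadd (h1 m) (h2 m)) f = Kadd (lin h1 f) (lin h2 f).
Proof.
apply: Kext => m' /=; rewrite !lin_coef -big_split /=.
by apply: eq_bigr => m _; rewrite mulrDr.
Qed.

Lemma lin_hscale (h : mono -> KC) a f :
  lin (fun m => Kscale a (h m)) f = Kscale a (lin h f).
Proof.
apply: Kext => m' /=; rewrite !lin_coef mulr_sumr.
by apply: eq_bigr => m _ /=; rewrite mulrCA.
Qed.

Lemma lin_hzero f : lin (fun _ => Kzero C) f = Kzero C.
Proof. by apply: Kext => m' /=; rewrite lin_coef big1 // => m _; rewrite mulr0. Qed.

Lemma Kmul_mono m1 m2 : Kmul (Kmono C m1) (Kmono C m2) = Kmono C (madd m1 m2).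
Proof. by rewrite /Kmul !lin_mono. Qed.

Lemma KmulDl (f g h : KC) : Kmul (Kadd f g) h = Kadd (Kmul f h) (Kmul g h).
Proof. exact: lin_add. Qed.
Lemma KmulZl a (f h : KC) : Kmul (Kscale a f) h = Kscale a (Kmul f h).
Proof. exact: lin_scale. Qed.
Lemma KmulDr (f g h : KC) : Kmul f (Kadd g h) = Kadd (Kmul f g) (Kmul f h).
Proof. by rewrite /Kmul -lin_hadd; apply: lin_ext => m; rewrite lin_add. Qed.
Lemma KmulZr a (f h : KC) : Kmul f (Kscale a h) = Kscale a (Kmul f h).
Proof. by rewrite /Kmul -lin_hscale; apply: lin_ext => m; rewrite lin_scale. Qed.
Lemma Kmul0r (f : KC) : Kmul f (Kzero C) = Kzero C.
Proof. rewrite /Kmul -[RHS](lin_hzero f); apply: lin_ext => m /=; exact: lin_zero. Qed.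
Lemma Kmul0l (f : KC) : Kmul (Kzero C) f = Kzero C.
Proof. exact: lin_zero. Qed.

End Infra.

Section B.
Variable C : numClosedFieldType.
Local Notation KC := (K C).

Lemma Sflat_add (f g : KC) : Sflat (Kadd f g) = Kadd (Sflat f) (Sflat g).
Proof. exact: lin_add. Qed.
Lemma Sflat_scale a (f : KC) : Sflat (Kscale a f) = Kscale a (Sflat f).
Proof. exact: lin_scale. Qed.
Lemma piK_add (f g : KC) : piK (Kadd f g) = Kadd (piK f) (piK g).
Proof. exact: lin_add. Qed.
Lemma piK_scale a (f : KC) : piK (Kscale a f) = Kscale a (piK f).
Proof. exact: lin_scale. Qed.

Lemma delta_add b (f g : KC) : delta b (Kadd f g) = Kadd (delta b f) (delta b g).
Proof. rewrite /delta Sflat_add piK_add; apply: Kext => m /=; ring. Qed.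
Lemma delta_scale b a (f : KC) : delta b (Kscale a f) = Kscale a (delta b f).
Proof. rewrite /delta Sflat_scale piK_scale; apply: Kext => m /=; ring. Qed.
Lemma iter_delta_scale b a (f : KC) i :
  iter i (delta b) (Kscale a f) = Kscale a (iter i (delta b) f).
Proof. by elim: i => //= i ->; exact: delta_scale. Qed.
Lemma iter_delta_add b (f g : KC) i :
  iter i (delta b) (Kadd f g) = Kadd (iter i (delta b) f) (iter i (delta b) g).
Proof. by elim: i => //= i ->; exact: delta_add. Qed.

Lemma bracket_mono (b c : C) n m1 m2 :
  bracket b c n (Kmono C m1) (Kmono C m2) =
    Ksum [seq Kscale ((-1) ^+ i
                      * gbinom ((mwt m1)%:~R + c * (midx m1)%:~R + n%:R - 1) (n - i)
                      * gbinom ((mwt m2)%:~R + c * (midx m2)%:~R + n%:R - 1) i)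
                (Kmul (iter i (delta b) (Kmono C m1))
                      (iter (n - i) (delta b) (Kmono C m2)))
         | i <- iota 0 n.+1].
Proof. by rewrite /bracket lin_mono /= lin_mono. Qed.

Lemma bracket_addl b c n (f1 f2 g : KC) :
  bracket b c n (Kadd f1 f2) g = Kadd (bracket b c n f1 g) (bracket b c n f2 g).
Proof. exact: lin_add. Qed.
Lemma bracket_scalel b c n a (f g : KC) :
  bracket b c n (Kscale a f) g = Kscale a (bracket b c n f g).
Proof. exact: lin_scale. Qed.
Lemma bracket_addr b c n (f g1 g2 : KC) :
  bracket b c n f (Kadd g1 g2) = Kadd (bracket b c n f g1) (bracket b c n f g2).
Proof. by rewrite /bracket -lin_hadd; apply: lin_ext => m /=; exact: lin_add. Qed.
Lemma bracket_scaler b c n a (f g : KC) :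
  bracket b c n f (Kscale a g) = Kscale a (bracket b c n f g).
Proof. by rewrite /bracket -lin_hscale; apply: lin_ext => m /=; exact: lin_scale. Qed.

Lemma gbinom0 (x : C) : gbinom x 0 = 1.
Proof. by rewrite /gbinom big_ord0 fact0 divr1. Qed.
Lemma gbinom1 (x : C) : gbinom x 1 = x.
Proof. by rewrite /gbinom big_ord1 /= subr0 divr1. Qed.
Lemma gbinom2 (x : C) : gbinom x 2 = x * (x - 1) / 2.
Proof. by rewrite /gbinom big_ord_recr big_ord1 /= subr0. Qed.

Lemma bracket0 b c (f g : KC) : bracket b c 0 f g = Kmul f g.
Proof.
rewrite /bracket /Kmul; apply: lin_ext => m1 /=; apply: lin_ext => m2 /=.
rewrite /= !gbinom0 lin_mono /= lin_mono; apply: Kext => m /=; ring.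
Qed.

End B.


Section Sc.
Variable C : numClosedFieldType.
Local Notation KC := (K C).
Variable t : C.

Lemma scl_fin (f : KC) : exists s : seq mono, forall m, t ^+ m_d m * coef f m != 0 -> m \in s.
Proof.
case: (coef_fin f) => s H; exists s => m Hm; apply: H.
by case: (eqVneq (coef f m) 0) Hm => // ->; rewrite mulr0 eqxx.
Qed.
Definition scl (f : KC) : KC := MkK (scl_fin f).
Lemma scl_coef f m : coef (scl f) m = t ^+ m_d m * coef f m.
Proof. by []. Qed.

Lemma scl_add (f g : KC) : scl (Kadd f g) = Kadd (scl f) (scl g).
Proof. by apply: Kext => m /=; ring. Qed.
Lemma scl_scale a (f : KC) : scl (Kscale a f) = Kscale a (scl f).
Proof. by apply: Kext => m /=; ring. Qed.
Lemma scl_zero : scl (Kzero C) = Kzero C.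
Proof. by apply: Kext => m /=; ring. Qed.
Lemma scl_mono m0 : scl (Kmono C m0) = Kscale (t ^+ m_d m0) (Kmono C m0).
Proof. apply: Kext => m /=; case: eqP => [->|]; by rewrite ?mulr1 ?mulr0. Qed.
Lemma scl_homog k p (f : KC) : homog k p f -> homog k p (scl f).
Proof.
move=> H m Hm; apply: H.
case: (eqVneq (coef f m) 0) => // E; move: Hm; by rewrite /= E mulr0 eqxx.
Qed.

Lemma scl_linc h (f : KC) : scl (lin h f) = lin (fun m => scl (h m)) f.
Proof.
apply: Kext => m' /=; rewrite !lin_coef mulr_sumr.
by apply: eq_bigr => m _ /=; ring.
Qed.

Lemma lin_scl h (f : KC) : lin h (scl f) = lin (fun m => Kscale (t ^+ m_d m) (h m)) f.
Proof.
apply: Kext => m'.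
have Hs : forall m, coef (scl f) m != 0 -> m \in supp f.
  move=> m Hm; apply: supp_cover.
  case: (eqVneq (coef f m) 0) => // E; move: Hm; by rewrite /= E mulr0 eqxx.
rewrite (lin_coefE _ _ (supp_uniq f) Hs) lin_coef.
by apply: eq_bigr => m _ /=; ring.
Qed.

Lemma scl_Kmul (f g : KC) : scl (Kmul f g) = Kmul (scl f) (scl g).
Proof.
rewrite /Kmul scl_linc lin_scl; apply: lin_ext => m /=.
rewrite scl_linc lin_scl -lin_hscale; apply: lin_ext => m' /=.
rewrite scl_mono; apply: Kext => m'' /=; rewrite exprD; ring.
Qed.


Lemma coef_scale a (f : KC) m : coef (Kscale a f) m = a * coef f m.
Proof. by []. Qed.

Lemma scl_Sflat (f : KC) : scl (Sflat f) = Sflat (scl f).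
Proof.
rewrite /Sflat /derK scl_linc lin_scl; apply: lin_ext => m /=.
rewrite !Kmul0r /E6 /E4 !KmulZr !Kmul_mono ?scl_add ?scl_scale ?scl_zero ?scl_Kmul ?scl_mono.
rewrite ?KmulZr ?KmulZl ?Kmul_mono.
apply: Kext => m' /=; rewrite !addn0; ring. Qed.


Lemma scl_piK (f : KC) : scl (piK f) = Kscale t (piK (scl f)).
Proof.
rewrite /piK scl_linc lin_scl -lin_hscale; apply: lin_ext => m /=.
rewrite /F2 /KB /KAinv !Kmul_mono scl_scale scl_mono.
apply: Kext => m' /=; rewrite addn0 add1n exprS; ring.
Qed.

Lemma scl_delta b (f : KC) : scl (delta b f) = delta (b * t) (scl f).
Proof. rewrite /delta scl_add scl_scale scl_Sflat scl_piK; apply: Kext => m /=; ring. Qed.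

Lemma scl_iter b i (f : KC) : scl (iter i (delta b) f) = iter i (delta (b * t)) (scl f).
Proof. by elim: i => //= i <-; exact: scl_delta. Qed.

Lemma scl_term b (a : C) i j m1 m2 :
  scl (Kscale a (Kmul (iter i (delta b) (Kmono C m1)) (iter j (delta b) (Kmono C m2)))) =
  Kscale (t ^+ m_d m1) (Kscale (t ^+ m_d m2)
    (Kscale a (Kmul (iter i (delta (b * t)) (Kmono C m1)) (iter j (delta (b * t)) (Kmono C m2))))).
Proof.
rewrite scl_scale scl_Kmul !scl_iter !scl_mono !iter_delta_scale KmulZl KmulZr.
by apply: Kext => m /=; ring.
Qed.

Lemma scl_H b c n m1 m2 :
  scl (Ksum [seq Kscale ((-1) ^+ i
                      * gbinom ((mwt m1)%:~R + c * (midx m1)%:~R + n%:R - 1) (n - i)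
                      * gbinom ((mwt m2)%:~R + c * (midx m2)%:~R + n%:R - 1) i)
                (Kmul (iter i (delta b) (Kmono C m1))
                      (iter (n - i) (delta b) (Kmono C m2)))
         | i <- iota 0 n.+1]) =
  Kscale (t ^+ m_d m1) (Kscale (t ^+ m_d m2)
   (Ksum [seq Kscale ((-1) ^+ i
                      * gbinom ((mwt m1)%:~R + c * (midx m1)%:~R + n%:R - 1) (n - i)
                      * gbinom ((mwt m2)%:~R + c * (midx m2)%:~R + n%:R - 1) i)
                (Kmul (iter i (delta (b * t)) (Kmono C m1))
                      (iter (n - i) (delta (b * t)) (Kmono C m2)))
         | i <- iota 0 n.+1])).
Proof.
apply: Kext => m; rewrite scl_coef !coef_scale !Ksum_coef !big_map !mulr_sumr.
apply: eq_bigr => i _; rewrite -scl_coef scl_term /=; ring.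
Qed.

Lemma scl_bracket b c n (f g : KC) :
  scl (bracket b c n f g) = bracket (b * t) c n (scl f) (scl g).
Proof.
rewrite /bracket scl_linc lin_scl; apply: lin_ext => m1 /=.
rewrite scl_linc lin_scl -lin_hscale; apply: lin_ext => m2; exact: scl_H.
Qed.

End Sc.

Lemma scl_bij (C : numClosedFieldType) (t : C) : t != 0 -> bijective (scl t).
Proof.
move=> t0; exists (scl t^-1) => f; apply: Kext => m /=;
  by rewrite exprVn mulrA ?mulVf ?mulfV ?expf_neq0 // mul1r.
Qed.

Notation mF2 := ((0%N, 0%N, -1, 1%N) : mono).
Notation mF22 := ((0%N, 0%N, -2, 2%N) : mono).
Notation mF23 := ((0%N, 0%N, -3, 3%N) : mono).
Notation mF24 := ((0%N, 0%N, -4, 4%N) : mono).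
Notation mB := ((0%N, 0%N, 0, 1%N) : mono).
Notation mE4 := ((1%N, 0%N, 0, 0%N) : mono).
Notation mE6 := ((0%N, 1%N, 0, 0%N) : mono).
Notation mF2E6 := ((0%N, 1%N, -1, 1%N) : mono).
Notation mF2E4 := ((1%N, 0%N, -1, 1%N) : mono).
Notation mBE6 := ((0%N, 1%N, 0, 1%N) : mono).
Notation mF2BE4 := ((1%N, 0%N, -1, 2%N) : mono).
Notation mF23B := ((0%N, 0%N, -3, 4%N) : mono).

Section D.
Variable C : numClosedFieldType.
Local Notation KC := (K C).
Local Notation Km := (Kmono C).

Lemma delta_mono b m : delta b (Km m) =
  Kadd (Kadd (Kscale ((m_a m)%:R * - 3^-1) (Km (madd ((m_a m).-1, m_b m, m_c m, m_d m) mE6)))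
             (Kscale ((m_b m)%:R * - 2^-1) (Km (madd (m_a m, (m_b m).-1, m_c m, m_d m) (madd mE4 mE4)))))
       (Kscale (b * (mwt m)%:~R) (Km (madd (madd mB (0%N, 0%N, -1, 0%N)) m))).
Proof.
rewrite /delta /Sflat /derK /piK !lin_mono.
rewrite !Kmul0r /E6 /E4 /F2 /KB /KAinv !KmulZr !Kmul_mono.
by apply: Kext => m' /=; ring.
Qed.

Ltac kcomp := apply: Kext => m'; rewrite /mwt /midx /m_a /m_b /m_c /m_d /=; ring.

Lemma dF2 b : delta b (Km mF2) = Kscale (2 * b) (Km mF22).
Proof. rewrite delta_mono; kcomp. Qed.
Lemma dF22 b : delta b (Km mF22) = Kscale (4 * b) (Km mF23).
Proof. rewrite delta_mono; kcomp. Qed.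
Lemma dB b : delta b (Km mB) = Kzero C.
Proof. rewrite delta_mono; kcomp. Qed.
Lemma dE4 b : delta b (Km mE4) = Kadd (Kscale (- 3^-1) (Km mE6)) (Kscale (4 * b) (Km mF2E4)).
Proof. rewrite delta_mono; kcomp. Qed.

Lemma two_neq0 : (2 : C) != 0. Proof. by rewrite pnatr_eq0. Qed.
Lemma three_neq0 : (3 : C) != 0. Proof. by rewrite pnatr_eq0. Qed.

Lemma br2F2 b c : bracket b c 2 (Km mF2) (Km mF2) = Kscale (12 * b ^+ 2) (Km mF24).
Proof.
rewrite bracket_mono /= ?subn0 ?subnn ?gbinom0 ?gbinom1 gbinom2 !dF2 !delta_scale dF22.
rewrite ?KmulZl ?KmulZr !Kmul_mono.
apply: Kext => m'; rewrite /mwt /midx /m_a /m_b /m_c /m_d /=.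
by field.
Qed.

Ltac kfield := apply: Kext => m'; rewrite /mwt /midx /m_a /m_b /m_c /m_d /=; by field.

Lemma br1F2E4 b c : bracket b c 1 (Km mF2) (Km mE4) = Kscale (- (2 / 3)) (Km mF2E6).
Proof.
rewrite bracket_mono /= ?subn0 ?subnn ?gbinom0 ?gbinom1 dF2 dE4.
rewrite ?KmulDr ?KmulDl ?KmulZl ?KmulZr !Kmul_mono; kfield.
Qed.

Lemma br1F2F22 b c : bracket b c 1 (Km mF2) (Km mF22) = Kzero C.
Proof.
rewrite bracket_mono /= ?subn0 ?subnn ?gbinom0 ?gbinom1 dF2 dF22.
rewrite ?KmulDr ?KmulDl ?KmulZl ?KmulZr !Kmul_mono; kfield.
Qed.

Lemma br1BE4 b c : bracket b c 1 (Km mB) (Km mE4) =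
  Kadd (Kscale (- (c / 3)) (Km mBE6)) (Kscale (4 * c * b) (Km mF2BE4)).
Proof.
rewrite bracket_mono /= ?subn0 ?subnn ?gbinom0 ?gbinom1 dB dE4 Kmul0l.
rewrite ?KmulDr ?KmulDl ?KmulZl ?KmulZr !Kmul_mono; kfield.
Qed.

Lemma br1BF22 b c : bracket b c 1 (Km mB) (Km mF22) = Kscale (4 * c * b) (Km mF23B).
Proof.
rewrite bracket_mono /= ?subn0 ?subnn ?gbinom0 ?gbinom1 dB dF22 Kmul0l.
rewrite ?KmulDr ?KmulDl ?KmulZl ?KmulZr !Kmul_mono; kfield.
Qed.

End D.



Lemma madd_inj m0 m m' : madd m0 m = madd m0 m' -> m = m'.
Proof.
case: m0 => [[[a0 b0] c0] d0]; case: m => [[[a b] c] d]; case: m' => [[[a' b'] c'] d'].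
by rewrite /madd /m_a /m_b /m_c /m_d /= => -[/addnI-> /addnI-> /addrI-> /addnI->].
Qed.

Lemma clsF2 m : mwt m = 2 -> midx m = 0 -> m = mF2.
Proof.
case: m => [[[a b] c] d]; rewrite /mwt /midx /m_a /m_b /m_c /m_d /= => h1 h2.
have ha : a = 0%N by lia.
have hb : b = 0%N by lia.
have hd : d = 1%N by lia.
have hc : c = -1 by lia.
by rewrite ha hb hc hd.
Qed.

Lemma clsB m : mwt m = 0 -> midx m = 1 -> m = mB.
Proof.
case: m => [[[a b] c] d]; rewrite /mwt /midx /m_a /m_b /m_c /m_d /= => h1 h2.
have ha : a = 0%N by lia.
have hb : b = 0%N by lia.
have hd : d = 1%N by lia.
have hc : c = 0 by lia.
by rewrite ha hb hc hd.
Qed.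

Lemma clsE4 m : mwt m = 4 -> midx m = 0 -> m = mE4 \/ m = mF22.
Proof.
case: m => [[[a b] c] d]; rewrite /mwt /midx /m_a /m_b /m_c /m_d /= => h1 h2.
have hb : b = 0%N by lia.
have [[ha hd]|[ha hd]] : (a = 1 /\ d = 0 \/ a = 0 /\ d = 2)%N by lia.
  left; have hc : c = 0 by lia.
  by rewrite ha hb hc hd.
right; have hc : c = -2 by lia.
by rewrite ha hb hc hd.
Qed.

Section E.
Variable C : numClosedFieldType.
Local Notation KC := (K C).
Local Notation Km := (Kmono C).

Lemma Kmul_shift m0 m (f : KC) : coef (Kmul (Km m0) f) (madd m0 m) = coef f m.
Proof.
rewrite /Kmul lin_mono lin_coef.
rewrite -[RHS](@sum_delta C (supp f) (coef f) m (supp_uniq f) (@supp_cover _ f)).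
apply: eq_bigr => m' _ /=.
case: (eqVneq m' m) => [->|ne]; first by rewrite !eqxx.
have -> : (madd m0 m == madd m0 m') = false.
  by apply/negP => /eqP /madd_inj E; rewrite E eqxx in ne.
by [].
Qed.

Lemma homog_mono m : homog (mwt m) (midx m) (Km m).
Proof. move=> m'; rewrite coef_mono; case: (eqVneq m' m) => [->|ne] //. by rewrite /= mulr0n eqxx. Qed.

Lemma coef_add (f g : KC) m : coef (Kadd f g) m = coef f m + coef g m.
Proof. by []. Qed.

Lemma homog1 k p (f : KC) m0 : homog k p f ->
  (forall m, mwt m = k -> midx m = p -> m = m0) -> f = Kscale (coef f m0) (Km m0).
Proof.
move=> H U; apply: Kext => m; rewrite coef_scale coef_mono.
case: (eqVneq m m0) => [->|ne]; first by rewrite mulr1.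
rewrite /= mulr0n mulr0.
case: (eqVneq (coef f m) 0) => // /H [h1 h2].
by move: ne; rewrite (U _ h1 h2) eqxx.
Qed.

Lemma homog2 k p (f : KC) m1 m2 : homog k p f -> m1 != m2 ->
  (forall m, mwt m = k -> midx m = p -> m = m1 \/ m = m2) ->
  f = Kadd (Kscale (coef f m1) (Km m1)) (Kscale (coef f m2) (Km m2)).
Proof.
move=> H n12 U; apply: Kext => m; rewrite coef_add !coef_scale !coef_mono.
case: (eqVneq m m1) => [->|ne1].
  by rewrite (negbTE n12) /= mulr0n; ring.
case: (eqVneq m m2) => [->|ne2]; first by rewrite /= mulr0n; ring.
rewrite /= mulr0n.
case: (eqVneq (coef f m) 0) => [->|/H [h1 h2]]; first by ring.
by case: (U _ h1 h2) => E; [move: ne1 | move: ne2]; rewrite E eqxx.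
Qed.

End E.

Section F.
Variable C : numClosedFieldType.
Local Notation KC := (K C).
Local Notation Km := (Kmono C).

Lemma onlyif (b c b' c' : C) (phi : KC -> KC) :
 (forall a f g, phi (Kadd (Kscale a f) g) = Kadd (Kscale a (phi f)) (phi g)) ->
 injective phi ->
 (forall k p f, homog k p f -> homog k p (phi f)) ->
 (forall n f g, phi (bracket b c n f g) = bracket b' c' n (phi f) (phi g)) ->
 c = c' /\ ((b = 0 /\ b' = 0) \/ (b != 0 /\ b' != 0)).
Proof.
move=> hl hinj hh hb.
have p0 : phi (Kzero C) = Kzero C.
  have := hl (-1) (Kzero C) (Kzero C).
  have -> : Kadd (Kscale (-1) (Kzero C)) (Kzero C) = Kzero C by apply: Kext => m /=; ring.
  by move=> E; apply: Kext => m; rewrite {1}E /=; ring.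
have pS : forall a f, phi (Kscale a f) = Kscale a (phi f).
  move=> a f; have := hl a f (Kzero C); rewrite p0.
  have -> : Kadd (Kscale a f) (Kzero C) = Kscale a f by apply: Kext => m /=; ring.
  by move=> ->; apply: Kext => m /=; ring.
have pA : forall f g, phi (Kadd f g) = Kadd (phi f) (phi g).
  move=> f g; have := hl 1 f g.
  have -> : Kscale 1 f = f by apply: Kext => m /=; ring.
  by move=> ->; apply: Kext => m /=; ring.
have pM : forall f g, phi (Kmul f g) = Kmul (phi f) (phi g).
  by move=> f g; rewrite -(bracket0 b c) hb bracket0.
have inj0 : forall f, phi f = Kzero C -> f = Kzero C.
  by move=> f E; apply: hinj; rewrite E p0.
have mono_neq0 : forall m, Km m <> Kzero C.
  move=> m E; have := congr1 (fun f : KC => coef f m) E; rewrite coef_mono eqxx /=.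
  by move/eqP; rewrite oner_eq0.
set t := coef (phi (Km mF2)) mF2.
have hF2 : phi (Km mF2) = Kscale t (Km mF2).
  have hm : homog 2 0 (Km mF2) := @homog_mono C mF2.
  by apply: (homog1 (hh _ _ _ hm)) => m; exact: clsF2.
have t0 : t != 0.
  apply/eqP => E; apply: (@mono_neq0 mF2); apply: inj0; rewrite hF2 E.
  by apply: Kext => m /=; ring.
have hF22 : phi (Km mF22) = Kscale (t ^+ 2) (Km mF22).
  have -> : Km mF22 = Kmul (Km mF2) (Km mF2) by rewrite Kmul_mono.
  rewrite pM hF2 KmulZl KmulZr Kmul_mono; apply: Kext => m /=; ring.
have hF24 : phi (Km mF24) = Kscale (t ^+ 4) (Km mF24).
  have -> : Km mF24 = Kmul (Km mF22) (Km mF22) by rewrite Kmul_mono.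
  rewrite pM hF22 KmulZl KmulZr Kmul_mono; apply: Kext => m /=; ring.
have eb : b' ^+ 2 = b ^+ 2 * t ^+ 2.
  have e2 := hb 2%N (Km mF2) (Km mF2).
  rewrite br2F2 pS hF24 hF2 bracket_scalel bracket_scaler br2F2 in e2.
  move: (congr1 (fun f : KC => coef f mF24) e2); rewrite /= => E.
  have h12t : 12 * t ^+ 2 != 0 by rewrite mulf_neq0 ?expf_neq0 // pnatr_eq0.
  apply/eqP; rewrite -subr_eq0.
  have : 12 * t ^+ 2 * (b' ^+ 2 - b ^+ 2 * t ^+ 2) = 0.
    rewrite (_ : 12 * t ^+ 2 * (b' ^+ 2 - b ^+ 2 * t ^+ 2) =
                 t * (t * (12 * b' ^+ 2 * 1)) - 12 * b ^+ 2 * (t ^+ 4 * 1)).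
      by rewrite E subrr.
    ring.
  by move/eqP; rewrite mulf_eq0 (negbTE h12t).
have hbb : (b = 0 /\ b' = 0) \/ (b != 0 /\ b' != 0).
  case: (eqVneq b 0) => [b0|b0].
    left; split => //; apply/eqP.
    have : b' ^+ 2 == 0 by rewrite eb b0 expr0n mul0r.
    by rewrite expf_eq0.
  right; split => //; apply/eqP => b'0; move: eb; rewrite b'0 expr0n.
  move/esym/eqP; rewrite mulf_eq0 !expf_eq0 /= (negbTE b0) (negbTE t0).
  by [].
split => //.
set g := coef (phi (Km mB)) mB.
have hB : phi (Km mB) = Kscale g (Km mB).
  have hm : homog 0 1 (Km mB) := @homog_mono C mB.
  by apply: (homog1 (hh _ _ _ hm)) => m; exact: clsB.
have g0 : g != 0.
  apply/eqP => E; apply: (@mono_neq0 mB); apply: inj0; rewrite hB E.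
  by apply: Kext => m /=; ring.
set x := coef (phi (Km mE4)) mE4.
set y := coef (phi (Km mE4)) mF22.
have hE4 : phi (Km mE4) = Kadd (Kscale x (Km mE4)) (Kscale y (Km mF22)).
  have hm : homog 4 0 (Km mE4) := @homog_mono C mE4.
  by apply: (homog2 (hh _ _ _ hm)) => // m; exact: clsE4.
have hF2E6 : phi (Km mF2E6) = Kscale (t * x) (Km mF2E6).
  have eA := hb 1%N (Km mF2) (Km mE4).
  rewrite br1F2E4 pS hF2 hE4 bracket_scalel bracket_addr !bracket_scaler in eA.
  rewrite br1F2E4 br1F2F22 in eA.
  have h23 : - (2 / 3) != 0 :> C.
    by rewrite oppr_eq0 mulf_neq0 ?invr_eq0 // pnatr_eq0.
  apply: Kext => m; apply: (mulfI h23).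
  move: (congr1 (fun f : KC => coef f m) eA); rewrite /= => ->; ring.
have x0 : x != 0.
  apply/eqP => E; apply: (@mono_neq0 mF2E6); apply: inj0; rewrite hF2E6 E.
  by apply: Kext => m /=; ring.
have hE6 : coef (phi (Km mE6)) mE6 = x.
  have : phi (Km mF2E6) = Kscale t (Kmul (Km mF2) (phi (Km mE6))).
    have -> : Km mF2E6 = Kmul (Km mF2) (Km mE6) by rewrite Kmul_mono.
    by rewrite pM hF2 KmulZl.
  rewrite hF2E6 => E; move: (congr1 (fun f : KC => coef f mF2E6) E).
  rewrite !coef_scale (Kmul_shift mF2 mE6) coef_mono eqxx mulr1 => E2.
  by apply: (mulfI t0); rewrite -E2.
have hBE6 : phi (Km mBE6) = Kscale g (Kmul (Km mB) (phi (Km mE6))).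
  have -> : Km mBE6 = Kmul (Km mB) (Km mE6) by rewrite Kmul_mono.
  by rewrite pM hB KmulZl.
have hF2BE4 : phi (Km mF2BE4) =
    Kscale (t * g) (Kadd (Kscale x (Km mF2BE4)) (Kscale y (Km mF23B))).
  have -> : Km mF2BE4 = Kmul (Km mF2) (Kmul (Km mB) (Km mE4)) by rewrite !Kmul_mono.
  rewrite !pM hF2 hB hE4 ?KmulZl ?KmulZr ?KmulDr ?KmulZr !Kmul_mono.
  by apply: Kext => m /=; ring.
have eB := hb 1%N (Km mB) (Km mE4).
rewrite br1BE4 pA !pS hB hE4 bracket_scalel bracket_addr !bracket_scaler in eB.
rewrite br1BE4 br1BF22 hBE6 hF2BE4 in eB.
move: (congr1 (fun f : KC => coef f mBE6) eB).
rewrite !coef_add !coef_scale (Kmul_shift mB mE6) hE6 /= => E.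
move/eqP: E; rewrite -subr_eq0 => /eqP E.
have : g * x * (c' - c) = 0.
  by rewrite -[RHS](mulr0 3) -E; field.
by move/eqP; rewrite !mulf_eq0 (negbTE g0) (negbTE x0) /= subr_eq0 => /eqP ->.
Qed.

End F.

Unset Implicit Arguments.

Theorem mainTheorem11 (C : numClosedFieldType) (beta c beta' c' : C) :
  modular_iso (bracket beta c) (bracket beta' c') <->
  c = c' /\ ((beta = 0 /\ beta' = 0) \/ (beta != 0 /\ beta' != 0)).
Proof.
split.
  case=> phi [hl hbij hh hb]; apply: (onlyif hl (bij_inj hbij) hh hb).
case=> <- hbb.
have [t [t0 bt]] : exists t : C, t != 0 /\ beta * t = beta'.
  case: hbb => [[-> ->]|[b0 b'0]]; first by exists 1; rewrite oner_eq0 mul0r.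
  exists (beta' / beta); split; first by rewrite mulf_neq0 ?invr_eq0.
  by rewrite mulrC divfK.
exists (scl t); split.
- by move=> a f g; rewrite scl_add scl_scale.
- exact: scl_bij.
- by move=> k p f; exact: scl_homog.
- by move=> n f g; rewrite scl_bracket bt.
Qed.
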